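(* Let $\mathcal{X}$ be a finite nonempty set of types, let $n=(n_x)_{x\in\mathcal{X}}$ be nonnegative integers such that $n_x$ is even for every $x\in\mathcal{X}$, and let $\Phi=(\Phi_{xy})_{x,y\in\mathcal{X}}$ be a real matrix with $\Phi_{xy}=\Phi_{yx}$ for all $x,y$. Then $\mathcal{W}_{\mathcal{P}}(n,\Phi)=\mathcal{W}_{\mathcal{B}}(n,n,\Phi/2)$.
   Context: Roommate matching with transferable utility: $n_x$ is the number of individuals of type $x$; a pair of types $\{x,y\}$ (possibly $x=y$) generates joint surplus $\Phi_{xy}$; singles get utility $0$. Feasible roommate matchings: $\mathcal{P}(n)=\{\mu=(\mu_{xy})_{x,y\in\mathcal{X}}:\ \mu_{xy}\in\mathbb{N},\ \mu_{xy}=\mu_{yx},\ 2\mu_{xx}+\sum_{y\neq x}\mu_{xy}\le n_x\ \forall x\}$. Total surplus $S_R(\mu;\Phi)=\sum_x\mu_{xx}\Phi_{xx}+\sum_{x\neq y}\mu_{xy}\Phi_{xy}/2$, and $\mathcal{W}_{\mathcal{P}}(n,\Phi)=\max_{\mu\in\mathcal{P}(n)}S_R(\mu;\Phi)$. Bipartite problem: $\mathcal{B}(n,n)=\{\nu\in\mathbb{N}^{\mathcal{X}\times\mathcal{X}}:\ \sum_y\nu_{xy}\le n_x\ \forall x,\ \sum_x\nu_{xy}\le n_y\ \forall y\}$ and $\mathcal{W}_{\mathcal{B}}(n,n,\Phi/2)=\max_{\nu\in\mathcal{B}(n,n)}\sum_{x,y}\nu_{xy}\Phi_{xy}/2$.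 *)

(* Defs.v *)
From HB Require Import structures.
From mathcomp Require Import all_boot all_order all_algebra.
Set Implicit Arguments. Unset Strict Implicit. Unset Printing Implicit Defensive.
Import Order.TTheory GRing.Theory Num.Theory.
Local Open Scope ring_scope.

Section Roommate.
Variables (R : realFieldType) (X : finType).

Definition roommate_feasible (n : X -> nat) (mu : X -> X -> nat) : Prop :=
  (forall x y, mu x y = mu y x) /\
  (forall x, (2 * mu x x + \sum_(y | y != x) mu x y <= n x)%N).

Definition roommate_surplus (Phi : X -> X -> R) (mu : X -> X -> nat) : R :=
  \sum_x (mu x x)%:R * Phi x x
  + \sum_x \sum_(y | y != x) (mu x y)%:R * Phi x y / 2.

Definition bipartite_feasible (n : X -> nat) (nu : X -> X -> nat) : Prop :=
  (forall x, (\sum_y nu x y <= n x)%N) /\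
  (forall y, (\sum_x nu x y <= n y)%N).

Definition bipartite_surplus (Psi : X -> X -> R) (nu : X -> X -> nat) : R :=
  \sum_x \sum_y (nu x y)%:R * Psi x y.

Definition is_WP (n : X -> nat) (Phi : X -> X -> R) (v : R) : Prop :=
  (exists mu, roommate_feasible n mu /\ roommate_surplus Phi mu = v) /\
  (forall mu, roommate_feasible n mu -> roommate_surplus Phi mu <= v).

Definition is_WB (n : X -> nat) (Psi : X -> X -> R) (v : R) : Prop :=
  (exists nu, bipartite_feasible n nu /\ bipartite_surplus Psi nu = v) /\
  (forall nu, bipartite_feasible n nu -> bipartite_surplus Psi nu <= v).

End Roommate.

(* Main.v *)
Require Import Defs.
From HB Require Import structures.
From mathcomp Require Import all_boot all_order all_algebra.
From mathcomp Require Import zify ring lra.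
Set Implicit Arguments. Unset Strict Implicit. Unset Printing Implicit Defensive.
Import Order.TTheory GRing.Theory Num.Theory.

Section Orient.
Variable V : finType.
Implicit Types (e f : V -> V -> nat).

Definition outd e x := \sum_y e x y.
Definition ind e x := \sum_y e y x.
Definition tot e := \sum_x \sum_y e x y.
Definition dlt (a b x y : V) : nat := ((x == a) && (y == b)).
Definition Pb e := exists f, (forall x y, f x y + f y x = e x y + e y x) /\
  (forall x, outd f x <= ind f x + 1 /\ ind f x <= outd f x + 1).

Lemma dlt_swap a b x y : dlt a b x y = dlt b a y x.
Proof. by rewrite /dlt andbC. Qed.

Lemma dlt_le1 a b x y : dlt a b x y <= 1.
Proof. by rewrite /dlt; case: (_ && _). Qed.

Lemma sum_eq1 (a : V) : \sum_x ((x == a) : nat) = 1.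
Proof.
rewrite (bigD1 a) //= eqxx big1 // => x /negbTE ->; done.
Qed.

Lemma sum_dlt_r a b x : \sum_y dlt a b x y = (x == a).
Proof.
rewrite /dlt; case: (x == a) => /=; first by rewrite sum_eq1.
by rewrite big1.
Qed.

Lemma sum_dlt_l a b y : \sum_x dlt a b x y = (y == b).
Proof.
rewrite /dlt; case: (y == b) => /=.
  by under eq_bigr do rewrite andbT; rewrite sum_eq1.
by rewrite big1 // => x _; rewrite andbF.
Qed.

Lemma Pb_ext e e' : (forall x y, e x y + e y x = e' x y + e' y x) -> Pb e -> Pb e'.
Proof.
move=> h [f [hf hb]]; exists f; split=> // x y; by rewrite hf h.
Qed.

Lemma step e2 u v w : Pb (fun x y => e2 x y + dlt u w x y) ->
  Pb (fun x y => e2 x y + dlt u v x y + dlt v w x y).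
Proof.
move=> [f' [hs hb]].
have core : forall a b, 0 < f' a b ->
  let f := fun x y => f' x y - dlt a b x y + dlt a v x y + dlt v b x y in
  (forall x y, f x y + f y x + (dlt a b x y + dlt a b y x) =
     f' x y + f' y x + dlt a v x y + dlt a v y x + dlt v b x y + dlt v b y x) /\
  (forall x, outd f x = outd f' x + (x == v)) /\
  (forall x, ind f x = ind f' x + (x == v)).
  move=> a b hab f.
  have hle : forall x y, dlt a b x y <= f' x y.
    move=> x y; rewrite /dlt; case: eqP => [->|] //=; case: eqP => [->|] //=.
  split; [|split].
  - move=> x y; rewrite /f; have := hle x y; have := hle y x; lia.
  - move=> x; rewrite /outd /f !big_split /= sumnB; last by move=> y _; apply: hle.
    rewrite !sum_dlt_r; have : (x == a : nat) <= \sum_y f' x y.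
      by rewrite -(sum_dlt_r a b); apply: leq_sum => y _; apply: hle.
    lia.
  - move=> x; rewrite /ind /f !big_split /= sumnB; last by move=> y _; apply: hle.
    rewrite !sum_dlt_l; have : (x == b : nat) <= \sum_y f' y x.
      by rewrite -(sum_dlt_l a b); apply: leq_sum => y _; apply: hle.
    lia.
have huw := hs u w; rewrite /dlt !eqxx /= in huw.
have [h1|h0] := boolP (0 < f' u w).
  have [hsym [ho hi]] := core _ _ h1.
  exists (fun x y => f' x y - dlt u w x y + dlt u v x y + dlt v w x y); split; last first.
    move=> x; rewrite ho hi; have := hb x; lia.
  move=> x y; have := hsym x y; have := hs x y; lia.
have h2 : 0 < f' w u by move: h0 huw; lia.
have [hsym [ho hi]] := core _ _ h2.
exists (fun x y => f' x y - dlt w u x y + dlt w v x y + dlt v u x y); split; last first.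
  move=> x; rewrite ho hi; have := hb x; lia.
move=> x y; have := hsym x y; have := hs x y.
rewrite (dlt_swap w u x y) (dlt_swap w u y x) (dlt_swap w v x y) (dlt_swap w v y x)
  (dlt_swap v u x y) (dlt_swap v u y x); lia.
Qed.

Lemma tot_add e a b : tot (fun x y => e x y + dlt a b x y) = tot e + 1.
Proof.
rewrite /tot; under eq_bigr do rewrite big_split /= sum_dlt_r.
by rewrite big_split /= sum_eq1.
Qed.

Lemma sub_dlt e a b : 0 < e a b ->
  let e1 := fun x y => e x y - dlt a b x y in
  (forall x y, e x y = e1 x y + dlt a b x y) /\ tot e1 < tot e /\
  (forall x, outd e x = outd e1 x + (x == a)) /\
  (forall y, ind e y = ind e1 y + (y == b)).
Proof.
move=> hab e1.
have hle : forall x y, dlt a b x y <= e x y.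
  move=> x y; rewrite /dlt; case: eqP => [->|] //=; case: eqP => [->|] //=.
have he : forall x y, e x y = e1 x y + dlt a b x y.
  by move=> x y; rewrite /e1 subnK.
split=> //; split; [|split].
- have -> : tot e = tot (fun x y => e1 x y + dlt a b x y).
    by rewrite /tot; apply: eq_bigr => x _; apply: eq_bigr => y _.
  by rewrite tot_add addn1.
- move=> x; rewrite /outd -(sum_dlt_r a b x) -big_split /=.
  by apply: eq_bigr => y _.
- move=> y; rewrite /ind -(sum_dlt_l a b y) -big_split /=.
  by apply: eq_bigr => x _.
Qed.

Lemma pos_sum (F : V -> nat) : 0 < \sum_y F y -> exists y, 0 < F y.
Proof.
case: (pickP (fun y => 0 < F y)) => [y hy|h]; first by exists y.
by rewrite big1 // => y _; have := h y; rewrite /=; case: (F y).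
Qed.

Lemma main_step e : (forall e', tot e' < tot e -> Pb e') -> Pb e.
Proof.
move=> IH.
have [/existsP [v hv]|hno] := boolP [exists v, 1 < outd e v].
  have [u hu] := pos_sum (ltnW hv).
  have [he1 [ht1 [ho1 _]]] := sub_dlt hu.
  have hv1 : 0 < outd (fun x y => e x y - dlt v u x y) v by move: (ho1 v) hv; rewrite eqxx; lia.
  have [w hw] := pos_sum hv1.
  have [he2 [ht2 _]] := @sub_dlt (fun x y => e x y - dlt v u x y) _ _ hw.
  apply: (@Pb_ext (fun x y => e x y - dlt v u x y - dlt v w x y + dlt u v x y + dlt v w x y)).
    move=> x y /=; have := he1 x y; have := he1 y x; have := he2 x y; have := he2 y x.
    rewrite (dlt_swap u v x y) (dlt_swap u v y x); lia.
  apply: step; apply: IH; rewrite tot_add; lia.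
have [/existsP [v hv]|hno2] := boolP [exists v, 1 < ind e v].
  have [u hu] := pos_sum (ltnW hv).
  have [he1 [ht1 [_ ho1]]] := sub_dlt hu.
  have hv1 : 0 < ind (fun x y => e x y - dlt u v x y) v by move: (ho1 v) hv; rewrite eqxx; lia.
  have [w hw] := pos_sum hv1.
  have [he2 [ht2 _]] := @sub_dlt (fun x y => e x y - dlt u v x y) _ _ hw.
  apply: (@Pb_ext (fun x y => e x y - dlt u v x y - dlt w v x y + dlt u v x y + dlt v w x y)).
    move=> x y /=; have := he1 x y; have := he1 y x; have := he2 x y; have := he2 y x.
    rewrite (dlt_swap v w x y) (dlt_swap v w y x); lia.
  apply: step; apply: IH; rewrite tot_add; lia.
exists e; split=> // x.
move: hno hno2 => /existsPn /(_ x) h1 /existsPn /(_ x) h2; lia.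
Qed.

Lemma orient e : Pb e.
Proof.
suff : forall N e, tot e <= N -> Pb e by apply; apply: leqnn.
elim=> [|N IHN] e0 h; apply: main_step => e' h'.
  by move: h h'; lia.
by apply: IHN; lia.
Qed.

End Orient.

Local Open Scope ring_scope.
Section Main.
Variables (R : realFieldType) (X : finType).
Implicit Types (Phi : X -> X -> R) (mu nu : X -> X -> nat) (n : X -> nat).

Lemma sumD1n (F : X -> nat) x : (\sum_y F y = F x + \sum_(y | y != x) F y)%N.
Proof. by rewrite (bigD1 x). Qed.

Lemma to_bip n Phi mu : roommate_feasible n mu ->
  exists nu, bipartite_feasible n nu /\
    bipartite_surplus (fun x y => Phi x y / 2) nu = roommate_surplus Phi mu.
Proof.
move=> [hsym hf].
pose nu x y := if x == y then (2 * mu x x)%N else mu x y.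
have hrow : forall x, (\sum_y nu x y = 2 * mu x x + \sum_(y | y != x) mu x y)%N.
  move=> x; rewrite (sumD1n _ x) /nu eqxx; congr (_ + _)%N.
  by apply: eq_bigr => y hy; rewrite eq_sym (negbTE hy).
exists nu; split; first split.
- by move=> x; rewrite hrow.
- move=> y; rewrite (sumD1n _ y) /nu eqxx.
  rewrite (eq_bigr (fun x => mu y x)); first exact: hf.
  by move=> x hx; rewrite (negbTE hx) hsym.
rewrite /bipartite_surplus /roommate_surplus -big_split /=.
apply: eq_bigr => x _; rewrite (bigD1 x) //= /nu eqxx; congr (_ + _).
  by rewrite natrM; field.
apply: eq_bigr => y hy; rewrite eq_sym (negbTE hy) mulrA //.
Qed.

Lemma from_half n Phi C : (forall x y, Phi x y = Phi y x) ->
  (forall x, \sum_y C x y + \sum_y C y x <= n x)%N ->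
  exists mu, roommate_feasible n mu /\
    roommate_surplus Phi mu = bipartite_surplus (fun x y => Phi x y / 2) C
                            + bipartite_surplus (fun x y => Phi x y / 2) C.
Proof.
move=> hPhi hC.
pose mu x y := if x == y then C x x else (C x y + C y x)%N.
exists mu; split; first split.
- move=> x y; rewrite /mu eq_sym; case: eqP => [->|_] //; lia.
- move=> x; rewrite /mu eqxx.
  rewrite (eq_bigr (fun y => C x y + C y x)%N); last first.
    by move=> y hy; rewrite eq_sym (negbTE hy).
  rewrite big_split /=; have := hC x; rewrite (sumD1n (C x) x) (sumD1n (fun y => C y x) x).
  lia.
pose G x y := (C x y + C y x)%:R * Phi x y / 2.
have -> : roommate_surplus Phi mu = \sum_x \sum_y G x y.
  rewrite /roommate_surplus -big_split /=; apply: eq_bigr => x _.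
  rewrite [RHS](bigD1 x) //=; congr (_ + _).
    by rewrite /mu /G eqxx natrD; field.
  by apply: eq_bigr => y hy; rewrite /mu /G eq_sym (negbTE hy).
rewrite /G /bipartite_surplus.
under eq_bigr do under eq_bigr do rewrite natrD mulrDl mulrDl.
under eq_bigr do rewrite big_split /=.
rewrite big_split /=; congr (_ + _).
  by apply: eq_bigr => x _; apply: eq_bigr => y _; rewrite mulrA.
rewrite exchange_big /=; apply: eq_bigr => x _; apply: eq_bigr => y _.
by rewrite hPhi mulrA.
Qed.

Definition ebip nu (p q : (X + X)%type) : nat :=
  match p, q with inl x, inr y => nu x y | _, _ => 0%N end.

Lemma bsurp_add (Psi : X -> X -> R) (A B : X -> X -> nat) :
  bipartite_surplus Psi (fun x y => A x y + B x y)%N =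
  bipartite_surplus Psi A + bipartite_surplus Psi B.
Proof.
rewrite /bipartite_surplus -big_split /=; apply: eq_bigr => x _.
rewrite -big_split /=; apply: eq_bigr => y _; by rewrite natrD mulrDl.
Qed.

Lemma bsurp_ext (Psi : X -> X -> R) (A B : X -> X -> nat) : (forall x y, A x y = B x y) ->
  bipartite_surplus Psi A = bipartite_surplus Psi B.
Proof.
by move=> h; rewrite /bipartite_surplus; apply: eq_bigr => x _; apply: eq_bigr => y _; rewrite h.
Qed.

Lemma to_room n Phi nu : (forall x, ~~ odd (n x)) -> (forall x y, Phi x y = Phi y x) ->
  bipartite_feasible n nu ->
  exists mu, roommate_feasible n mu /\
    bipartite_surplus (fun x y => Phi x y / 2) nu <= roommate_surplus Phi mu.
Proof.
move=> hn hPhi [hr hc].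
have [f [hs hb]] := orient (ebip nu).
pose A x y := f (inl x) (inr y).
pose Bm x y := f (inr y) (inl x).
have hll : forall x x', f (inl x) (inl x') = 0%N.
  by move=> x x'; have := hs (inl x) (inl x'); rewrite /ebip /=; lia.
have hrr : forall x x', f (inr x) (inr x') = 0%N.
  by move=> x x'; have := hs (inr x) (inr x'); rewrite /ebip /=; lia.
have hnu : forall x y, nu x y = (A x y + Bm x y)%N.
  by move=> x y; have := hs (inl x) (inr y); rewrite /A /Bm /ebip /=; lia.
have o1 : forall x, outd f (inl x) = (\sum_y A x y)%N.
  by move=> x; rewrite /outd big_sumType /= big1 ?add0n.
have i1 : forall x, ind f (inl x) = (\sum_y Bm x y)%N.
  by move=> x; rewrite /ind big_sumType /= big1 ?add0n.
have o2 : forall y, outd f (inr y) = (\sum_x Bm x y)%N.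
  by move=> y; rewrite /outd big_sumType /= [X in (_ + X)%N]big1 ?addn0.
have i2 : forall y, ind f (inr y) = (\sum_x A x y)%N.
  by move=> y; rewrite /ind big_sumType /= [X in (_ + X)%N]big1 ?addn0.
have hrow : forall x, (\sum_y A x y + \sum_y Bm x y <= n x)%N.
  by move=> x; rewrite -big_split /= -(eq_bigr _ (fun y _ => hnu x y)); apply: hr.
have hcol : forall y, (\sum_x A x y + \sum_x Bm x y <= n y)%N.
  by move=> y; rewrite -big_split /= -(eq_bigr _ (fun x _ => hnu x y)); apply: hc.
have hev : forall x, n x = ((n x)./2 * 2)%N.
  by move=> x; have := odd_double_half (n x); rewrite (negbTE (hn x)) add0n -muln2.
have hA : forall x, (\sum_y A x y + \sum_y A y x <= n x)%N.
  move=> x; have := hrow x; have := hcol x; have := hb (inl x); have := hb (inr x).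
  rewrite o1 i1 o2 i2; have := hev x; lia.
have hB : forall x, (\sum_y Bm x y + \sum_y Bm y x <= n x)%N.
  move=> x; have := hrow x; have := hcol x; have := hb (inl x); have := hb (inr x).
  rewrite o1 i1 o2 i2; have := hev x; lia.
have [muA [fA sA]] := from_half hPhi hA.
have [muB [fB sB]] := from_half hPhi hB.
rewrite (bsurp_ext _ hnu) bsurp_add.
case: (leP (bipartite_surplus (fun x y => Phi x y / 2) Bm)
            (bipartite_surplus (fun x y => Phi x y / 2) A)) => h.
  by exists muA; split=> //; rewrite sA lerD2l.
by exists muB; split=> //; rewrite sB lerD2r ltW.
Qed.

End Main.

Lemma fin_max (R : realFieldType) (T : finType) (P : pred T) (F : T -> R) i0 :
  P i0 -> exists i, P i /\ forall j, P j -> F j <= F i.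
Proof.
move=> h0.
suff : forall s : seq T, exists i, P i /\ forall j, j \in s -> P j -> F j <= F i.
  by move=> /(_ (enum T)) [i [hi hj]]; exists i; split=> // j; apply: hj; rewrite mem_enum.
elim=> [|a s [i [hi hj]]]; first by exists i0.
case hPa: (P a); last first.
  by exists i; split=> // j; rewrite inE => /orP [/eqP -> | /hj //]; rewrite hPa.
case: (leP (F a) (F i)) => hle.
  by exists i; split=> // j; rewrite inE => /orP [/eqP -> | /hj //].
exists a; split=> // j; rewrite inE => /orP [/eqP -> //| hs hPj].
by apply: le_trans (hj _ hs hPj) (ltW hle).
Qed.

Lemma rm_ext (R : realFieldType) (X : finType) (Phi : X -> X -> R) (mu mu' : X -> X -> nat) :
  (forall x y, mu x y = mu' x y) -> roommate_surplus Phi mu = roommate_surplus Phi mu'.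
Proof.
move=> h; rewrite /roommate_surplus; congr (_ + _); apply: eq_bigr => x _; first by rewrite h.
by apply: eq_bigr => y _; rewrite h.
Qed.

Theorem proposition1 (R : realFieldType) (X : finType) (x0 : X)
    (n : X -> nat) (Phi : X -> X -> R)
    (hn : forall x, ~~ odd (n x))
    (hPhi : forall x y, Phi x y = Phi y x) :
  exists v : R, is_WP n Phi v /\ is_WB n (fun x y => Phi x y / 2) v.
Proof.
pose M := (\sum_x n x).+1%N.
pose toM (g : {ffun X * X -> 'I_M}) x y := nat_of_ord (g (x, y)).
pose Pg g := [forall x, [forall y, toM g x y == toM g y x]] &&
             [forall x, (2 * toM g x x + \sum_(y | y != x) toM g x y <= n x)%N].
have PgE : forall g, Pg g -> roommate_feasible n (toM g).
  move=> g /andP [/forallP h1 /forallP h2]; split=> [x y|x]; last exact: h2.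
  by apply/eqP; have /forallP := h1 x; apply.
have bound : forall mu, roommate_feasible n mu -> forall x y, (mu x y < M)%N.
  move=> mu [hs hf] x y; rewrite ltnS.
  have hnx : (n x <= \sum_x n x)%N by rewrite (bigD1 x) //= leq_addr.
  apply: leq_trans hnx; have := hf x; case: (eqVneq y x) => [->|hyx]; first by lia.
  rewrite (bigD1 y) //=; lia.
have toPg : forall mu, roommate_feasible n mu ->
    exists g, Pg g /\ forall x y, toM g x y = mu x y.
  move=> mu hmu; exists [ffun p => inord (mu p.1 p.2)].
  have hg : forall x y, toM [ffun p => inord (mu p.1 p.2)] x y = mu x y.
    by move=> x y; rewrite /toM ffunE /= inordK //; apply: bound.
  split=> //; case: hmu => hs hf; apply/andP; split; apply/forallP => x.
    by apply/forallP => y; rewrite !hg hs.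
  by rewrite hg; under eq_bigr do rewrite hg; apply: hf.
have [g0 [hg0 _]] : exists g, Pg g /\ forall x y, toM g x y = 0%N.
  apply: toPg; split=> // x; by rewrite big1.
have [gs [hgs hmax]] := fin_max (fun g => roommate_surplus Phi (toM g)) hg0.
exists (roommate_surplus Phi (toM gs)).
have allP : forall mu, roommate_feasible n mu ->
    roommate_surplus Phi mu <= roommate_surplus Phi (toM gs).
  move=> mu hmu; have [g [hg he]] := toPg mu hmu.
  by rewrite -(rm_ext Phi he); apply: hmax.
split; split.
- by exists (toM gs); split=> //; apply: PgE.
- exact: allP.
- exact: to_bip (PgE _ hgs).
- move=> nu hnu; have [mu [hmu hle]] := to_room hn hPhi hnu.
  by apply: le_trans hle (allP _ hmu).
Qed.
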